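(* For every $n\ge2$, $S_{2,0}(2n-1)=-\dfrac{3B_{2n}}{n}$.
   Context: $B_m$ denotes the $m$-th Bernoulli number. Let $a_0,a_1,\dots$ be indeterminates and $a(x)=\sum_{i\ge0}a_ix^i$. For a positive integer $j$ set $G(x)=\prod_{i=0}^{j-1}\frac{1+a(x)x^2}{1+ix}$, $H(x)=\prod_{i=1-j}^{-1}\frac{1+ix}{1+a(x)x^2}$, $u=2j-1$, $v=j(j-1)$. For each $n\ge1$ there are unique polynomials $S_0(n),\dots,S_n(n)\in\mathbb{Q}[a_0,\dots,a_{n-2}]$, independent of $j$, such that for every positive integer $j$ the coefficient of $x^{n-1}$ in $\frac{G(x)-H(x)}{x^2}(1+a(x)x^2)$ equals $u\big(a_{n-1}+S_0(n)+\sum_{i=1}^nS_i(n)v^i\big)$. For $1\le i\le n$, $S_{i,0}(n)\in\mathbb{Q}$ denotes the constant term of $S_i(n)$. *)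

(* Defs.v *)
From mathcomp Require Import all_boot all_order all_algebra.
From mathcomp Require Import mpoly.
Set Implicit Arguments. Unset Strict Implicit. Unset Printing Implicit Defensive.
Import GRing.Theory Num.Theory.
Local Open Scope ring_scope.

(*    B_m = -1/(m+1) * sum_{k<m} C(m+1,k) B_k   (so B_1 = -1/2).       *)
Fixpoint bern_seq (m : nat) : seq rat :=
  match m with
  | 0 => [:: 1]
  | m'.+1 =>
      let s := bern_seq m' in
      rcons s (- (m'.+2)%:R^-1 *
               \sum_(k < m'.+1) ('C(m'.+2, k))%:R * nth 0 s k)
  end.

Definition bernoulli (m : nat) : rat := nth 0 (bern_seq m) m.

(* Truncated formal power series.  Coefficients live in the ring       *)
(* Q[a_0, ..., a_{n-1}] = {mpoly rat[n.-1.+1]} (n >= 1).  Power series *)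
(* are represented by polynomials in x, exact modulo x^(N+1).          *)
(* Every factor below has constant term 1 (or is a polynomial), so     *)
(* the coefficients of degree <= N of products are exact.              *)

(* inverse modulo x^(N+1) of 1 + q, where q(0) = 0 :                   *)
Definition inv1p (R : comNzRingType) (N : nat) (q : {poly R}) : {poly R} :=
  \sum_(k < N.+1) (- q) ^+ k.

Section Setting.
Variable n : nat.
Local Notation R := {mpoly rat[n.-1.+1]}.

(* truncation order: we need coefficients up to degree n+1 *)
Definition trN : nat := n.+2.

(* (a_i with i >= n only affect coefficients of degree >= n+2).        *)
Definition aser : {poly R} := \sum_(i < n.-1.+1) ('X_i : R)%:P * 'X^i.

Definition onepax2 : {poly R} := 1 + aser * 'X^2.

Definition Gser (j : nat) : {poly R} :=
  \prod_(0 <= i < j) (onepax2 * inv1p trN ((i%:R : R) *: 'X)).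

(* H(x) = prod_{i=1-j}^{-1} (1 + i x) / (1 + a(x) x^2)
        = prod_{k=1}^{j-1} (1 - k x) / (1 + a(x) x^2) *)
Definition Hser (j : nat) : {poly R} :=
  \prod_(1 <= k < j) ((1 - (k%:R : R) *: 'X) * inv1p trN (aser * 'X^2)).

(* division by x^2 is drop_poly 2 (G - H has no terms of degree < 2).  *)
Definition lhs_coef (j : nat) : R :=
  (drop_poly 2 (Gser j - Hser j) * onepax2)`_(n.-1).

Definition embS (p : {mpoly rat[n.-1]}) : R :=
  mmap (@mpolyC _ _) (fun i : 'I_(n.-1) => 'X_(widen_ord (leqnSn _) i)) p.

Definition a_last : R := 'X_(@ord_max n.-1).

(* S = (S_0(n), ..., S_n(n)) (entries S i with i > n are irrelevant)   *)
Definition S_family (S : nat -> {mpoly rat[n.-1]}) : Prop :=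
  forall j : nat, (0 < j)%N ->
    lhs_coef j =
      ((2 * j - 1)%N%:R : R) *
        (a_last + embS (S 0%N)
         + \sum_(1 <= i < n.+1) embS (S i) * ((j * (j - 1))%N%:R : R) ^+ i).

End Setting.

Definition const_term (k : nat) (p : {mpoly rat[k]}) : rat := p@_0%MM.

(* Main.v *)
Require Import Defs.
From mathcomp Require Import all_boot all_order all_algebra.
From mathcomp Require Import mpoly.
From mathcomp Require Import ring.
Set Implicit Arguments. Unset Strict Implicit. Unset Printing Implicit Defensive.
Import GRing.Theory Num.Theory.
Local Open Scope ring_scope.

Lemma bern_seq_size m : size (bern_seq m) = m.+1.
Proof. by elim: m => //= m IH; rewrite size_rcons IH. Qed.

Lemma bern_seq_nth m k : (k <= m)%N -> nth 0 (bern_seq m) k = bernoulli k.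
Proof.
elim: m => [|m IH]; first by rewrite leqn0 => /eqP ->.
rewrite leq_eqVlt => /orP [/eqP ->|]; first by [].
rewrite ltnS => hk /=; rewrite nth_rcons bern_seq_size ltnS hk; exact: IH.
Qed.

Lemma bernoulliS m : bernoulli m.+1 =
  - (m.+2)%:R^-1 * \sum_(k < m.+1) ('C(m.+2, k))%:R * bernoulli k.
Proof.
rewrite /bernoulli /= nth_rcons bern_seq_size ltnn eqxx; congr (_ * _).
by apply: eq_bigr => k _; rewrite bern_seq_nth // -ltnS.
Qed.

Lemma bernoulli0 : bernoulli 0 = 1. Proof. by []. Qed.

(* power-sum polynomials *)
Fixpoint pseq (k : nat) : seq {poly rat} :=
  match k with
  | 0 => [:: 'X]
  | k'.+1 => let s := pseq k' in
      rcons s ((k'.+2)%:R^-1 *: ('X^(k'.+2) - \sum_(l < k'.+1) ('C(k'.+2, l))%:R *: nth 0 s l))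
  end.
Definition Pp k := nth 0 (pseq k) k.

Lemma pseq_size m : size (pseq m) = m.+1.
Proof. by elim: m => //= m IH; rewrite size_rcons IH. Qed.

Lemma pseq_nth m k : (k <= m)%N -> nth 0 (pseq m) k = Pp k.
Proof.
elim: m => [|m IH]; first by rewrite leqn0 => /eqP ->.
rewrite leq_eqVlt => /orP [/eqP ->|]; first by [].
rewrite ltnS => hk /=; rewrite nth_rcons pseq_size ltnS hk; exact: IH.
Qed.

Lemma Pp_rec k : Pp k = (k.+1)%:R^-1 *: ('X^(k.+1) - \sum_(l < k) ('C(k.+1, l))%:R *: Pp l).
Proof.
case: k => [|k]; first by rewrite /Pp /= big_ord0 subr0 invr1 scale1r expr1.
rewrite /Pp /= nth_rcons pseq_size ltnn eqxx; congr (_ *: (_ - _)).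
by apply: eq_bigr => l _; rewrite pseq_nth // -ltnS.
Qed.

Lemma Pp_val k (j : nat) : (Pp k).[j%:R] = \sum_(i < j) (i%:R : rat) ^+ k.
Proof.
elim/ltn_ind: k => k IH.
rewrite Pp_rec hornerZ hornerD hornerN horner_sum hornerXn.
have tel : (j%:R : rat) ^+ k.+1 = \sum_(i < j) \sum_(l < k.+1) ('C(k.+1, l))%:R * (i%:R : rat) ^+ l.
  rewrite -(big_mkord xpredT (fun i => \sum_(l < k.+1) ('C(k.+1, l))%:R * (i%:R : rat) ^+ l)).
  have -> : (j%:R : rat) ^+ k.+1 = (j%:R : rat) ^+ k.+1 - (0%:R) ^+ k.+1 by rewrite expr0n subr0.
  rewrite -(telescope_sumr (fun i => (i%:R : rat) ^+ k.+1)) //.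
  apply: eq_bigr => i _.
  rewrite -addn1 natrD [_ + 1%:R]addrC exprDn big_ord_recr /= subnn binn mulr1n.
  rewrite expr0 mul1r addrK; apply: eq_bigr => l _.
  by rewrite expr1n mul1r mulr_natl.
rewrite tel exchange_big /= big_ord_recr /=.
have -> : \sum_(l < k) ('C(k.+1, l)%:R *: Pp l).[j%:R] =
   \sum_(l < k) \sum_(i < j) ('C(k.+1, l))%:R * (i%:R : rat) ^+ l.
  by apply: eq_bigr => l _; rewrite hornerZ IH // mulr_sumr.
rewrite addrAC subrr add0r -mulr_sumr mulrA binSn mulVf ?mul1r //.
by rewrite pnatr_eq0.
Qed.

Lemma Pp_coef0 k : (Pp k)`_0 = 0.
Proof. by rewrite -horner_coef0 -[0 : rat]/(0%:R) Pp_val big_ord0. Qed.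

Lemma Pp_coef1 k : (Pp k)`_1 = bernoulli k.
Proof.
elim/ltn_ind: k => k IH.
rewrite Pp_rec coefZ coefB coef_sum coefXn.
case: k IH => [|k] IH; first by rewrite big_ord0 subr0 /= invr1 mul1r.
rewrite bernoulliS /= sub0r mulrN -mulNr; congr (_ * _).
by apply: eq_bigr => l _; rewrite coefZ IH.
Qed.

Lemma poly_nat_eq (p q : {poly rat}) (a : nat) :
  (forall j : nat, (a <= j)%N -> p.[j%:R] = q.[j%:R]) -> p = q.
Proof.
move=> h; apply/eqP; rewrite -subr_eq0; apply/negPn/negP => nz.
have := @max_poly_roots _ (p - q) [seq (i + a)%:R | i <- iota 0 (size (p - q))] nz.
rewrite size_map size_iota ltnn => H; apply: notF; apply: H.
  apply/allP => x /mapP [i _ ->]; rewrite /root hornerD hornerN h ?subrr //.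
  exact: leq_addl.
rewrite map_inj_uniq ?iota_uniq // => x y /eqP; rewrite eqr_nat eqn_add2r.
by move/eqP.
Qed.

Lemma Pp_shift k : Pp k \Po ('X + 1) = Pp k + 'X^k.
Proof.
apply: (@poly_nat_eq _ _ 0) => j _.
rewrite horner_comp !hornerE natr1 !Pp_val big_ord_recr.
by [].
Qed.

Lemma Pp_shiftv k (x : rat) : (Pp k).[x + 1] = (Pp k).[x] + x ^+ k.
Proof. by have := congr1 (fun p => p.[x]) (Pp_shift k); rewrite /= horner_comp !hornerE. Qed.

Lemma even_exprN (x : rat) k : ~~ odd k -> (- x) ^+ k = x ^+ k.
Proof. by move=> ek; rewrite exprNn -signr_odd (negbTE ek) expr0 mul1r. Qed.

Lemma Pp_negX k : (0 < k)%N -> ~~ odd k -> Pp k \Po (- 'X) + Pp k + 'X^k = 0.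
Proof.
move=> k0 ek; set c := _ + _ + _.
have cS : forall x : rat, c.[x + 1] = c.[x].
  move=> x; rewrite /c !hornerE !horner_comp !hornerE Pp_shiftv.
  have -> : - (x + 1) = (- x - 1) by rewrite opprD.
  have -> : (Pp k).[- x] = (Pp k).[(- x - 1) + 1] by rewrite subrK.
  rewrite Pp_shiftv -opprD even_exprN //.
  by rewrite addrC; ring.
apply: (@poly_nat_eq _ _ 0) => j _.
rewrite horner0; elim: j => [|j IH].
  rewrite /c !hornerE horner_comp !hornerE oppr0 horner_coef0 Pp_coef0.
  by rewrite expr0n gtn_eqF // addr0.
by rewrite -natr1 cS.
Qed.

Lemma coef_comp_negX (p : {poly rat}) i : (p \Po (- 'X))`_i = (-1) ^+ i * p`_i.
Proof.
rewrite coef_comp_poly.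
have e j : ((- 'X) ^+ j : {poly rat})`_i = (-1) ^+ j * (i == j)%:R.
  have E : ((-1 : {poly rat}) ^+ j) = ((-1) ^+ j)%:P by rewrite rmorphXn /= rmorphN1.
  by rewrite [(- 'X) ^+ j]exprNn E coefCM coefXn.
under eq_bigr => j _ do rewrite e.
case: (ltnP i (size p)) => hi.
  rewrite (bigD1 (Ordinal hi)) //= eqxx mulr1 big1 ?addr0; first by rewrite mulrC.
  move=> j /eqP nj; case: eqP => [ij|]; last by rewrite !mulr0.
  by case: nj; apply: val_inj; rewrite /= ij.
rewrite nth_default // mulr0 big1 // => j _.
have : (j < i)%N by apply: leq_trans (ltn_ord j) hi.
by rewrite ltn_neqAle eq_sym => /andP [/negbTE -> _]; rewrite !mulr0.
Qed.

Lemma Pp_coef2 k : (0 < k)%N -> ~~ odd k -> k != 2%N -> (Pp k)`_2 = 0.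
Proof.
move=> k0 ek k2.
have := congr1 (fun p : {poly rat} => p`_2) (Pp_negX k0 ek).
rewrite /= !coefD coef_comp_negX coefXn eq_sym (negbTE k2) addr0 coef0 expr2.
rewrite mulrNN !mul1r => /eqP; rewrite -mulr2n mulrn_eq0 /= => /eqP //.
Qed.

Fixpoint cseq (s : nat -> rat) (m : nat) : seq {poly rat} :=
  match m with
  | 0 => [:: 1]
  | m'.+1 => let l := cseq s m' in
      rcons l ((m'.+1)%:R^-1 *: \sum_(k < m'.+1) (s k.+1 *: (Pp k.+1 * nth 0 l (m' - k))))
  end.
Definition Qp s m := nth 0 (cseq s m) m.

Lemma cseq_size s m : size (cseq s m) = m.+1.
Proof. by elim: m => //= m IH; rewrite size_rcons IH. Qed.

Lemma cseq_nth s m k : (k <= m)%N -> nth 0 (cseq s m) k = Qp s k.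
Proof.
elim: m => [|m IH]; first by rewrite leqn0 => /eqP ->.
rewrite leq_eqVlt => /orP [/eqP ->|]; first by [].
rewrite ltnS => hk /=; rewrite nth_rcons cseq_size ltnS hk; exact: IH.
Qed.

Lemma Qp0 s : Qp s 0 = 1. Proof. by []. Qed.

Lemma QpS s m : Qp s m.+1 =
  (m.+1)%:R^-1 *: \sum_(k < m.+1) (s k.+1 *: (Pp k.+1 * Qp s (m - k))).
Proof.
rewrite /Qp /= nth_rcons cseq_size ltnn eqxx; congr (_ *: _).
by apply: eq_bigr => k _; rewrite cseq_nth // leq_subr.
Qed.

Lemma Qp_val s (c : nat -> rat) (j : nat) M :
  c 0%N = 1 ->
  (forall m, (m < M)%N -> (m.+1)%:R * c m.+1 =
      \sum_(k < m.+1) s k.+1 * (Pp k.+1).[j%:R] * c (m - k)%N) ->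
  forall m, (m <= M)%N -> (Qp s m).[j%:R] = c m.
Proof.
move=> c0 hc; elim/ltn_ind => m IH hm.
case: m IH hm => [|m] IH hm; first by rewrite Qp0 hornerC c0.
rewrite QpS hornerZ horner_sum.
have -> : c m.+1 = (m.+1)%:R^-1 * ((m.+1)%:R * c m.+1).
  by rewrite mulrA mulVf ?mul1r // pnatr_eq0.
rewrite hc //; congr (_ * _); apply: eq_bigr => k _.
rewrite hornerZ hornerM IH ?mulrA //.
  by rewrite ltnS leq_subr.
by apply: leq_trans (leq_subr _ _) (ltnW hm).
Qed.

Lemma coef1M (p q : {poly rat}) : (p * q)`_1 = p`_0 * q`_1 + p`_1 * q`_0.
Proof. by rewrite coefM big_ord_recr big_ord_recr big_ord0 /= add0r. Qed.

Lemma coef2M (p q : {poly rat}) :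
  (p * q)`_2 = p`_0 * q`_2 + p`_1 * q`_1 + p`_2 * q`_0.
Proof. by rewrite coefM !big_ord_recr big_ord0 /= add0r. Qed.

Lemma Qp_c0 s m : (Qp s m.+1)`_0 = 0.
Proof.
rewrite QpS coefZ coef_sum big1 ?mulr0 // => k _.
by rewrite coefZ coef0M Pp_coef0 mul0r mulr0.
Qed.

Lemma Qp_c0' s m : (Qp s m)`_0 = (m == 0%N)%:R.
Proof. by case: m => [|m]; [rewrite Qp0 (coef1 _ 0) | rewrite Qp_c0]. Qed.

Lemma Qp_c1 s m : (Qp s m.+1)`_1 = (m.+1)%:R^-1 * (s m.+1 * bernoulli m.+1).
Proof.
rewrite QpS coefZ coef_sum big_ord_recr /= subnn big1 ?add0r.
  by rewrite coefZ coef1M Pp_coef0 Pp_coef1 Qp0 mul0r add0r (coef1 _ 0) mulr1.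
move=> k _; rewrite coefZ coef1M Pp_coef0 Qp_c0' subn_eq0.
by rewrite leqNgt ltn_ord /= mul0r !mulr0.
Qed.

Lemma Qp_c2 s m : (Qp s m.+1)`_2 = (m.+1)%:R^-1 *
  (\sum_(k < m) s k.+1 * bernoulli k.+1 * (Qp s (m - k))`_1 + s m.+1 * (Pp m.+1)`_2).
Proof.
rewrite QpS coefZ coef_sum big_ord_recr /= subnn; congr (_ * (_ + _)).
  apply: eq_bigr => k _; rewrite coefZ coef2M Pp_coef0 Pp_coef1 Qp_c0' subn_eq0.
  by rewrite leqNgt ltn_ord /= mul0r !mulr0 add0r addr0 mulrA.
by rewrite coefZ coef2M Pp_coef0 Pp_coef1 Qp0 (coef1 _ 0) (coef1 _ 1) mul0r add0r mulr0 add0r mulr1.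
Qed.

Definition sG (k : nat) : rat := (-1) ^+ k.
Definition sH (k : nat) : rat := -1.

Lemma F_c0 m : (Qp sG m.+1 - Qp sH m.+1)`_0 = 0.
Proof. by rewrite coefB !Qp_c0 subrr. Qed.

Lemma F_c1 m : odd m ->
  (Qp sG m.+1 - Qp sH m.+1)`_1 = (m.+1)%:R^-1 * (2 * bernoulli m.+1).
Proof.
move=> om; rewrite coefB !Qp_c1 /sG /sH -signr_odd /= om /= expr0; ring.
Qed.

Lemma F_c2 m : odd m -> m.+1 != 2%N ->
  (Qp sG m.+1 - Qp sH m.+1)`_2 = 0.
Proof.
move=> om m2; rewrite coefB !Qp_c2 Pp_coef2 //=; last by rewrite om.
rewrite !mulr0 !addr0 -mulrBr -sumrB big1 ?mulr0 // => k _.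
have hk : (m - k = (m - k.+1).+1)%N by rewrite subnSK.
rewrite hk !Qp_c1 /sG /sH.
set r := (m - k.+1)%N.
have hr : (k.+1 + r.+1 = m.+1)%N by rewrite /r -hk addSn subnKC // ltnW.
have e : odd r.+1 = odd k.+1.
  have := congr1 odd hr; rewrite oddD /= om /=.
  by case: (odd k); case: (odd r).
rewrite -(signr_odd _ r.+1) -(signr_odd _ k.+1) e.
by case: (odd k.+1); rewrite /= ?expr0 ?expr1; ring.
Qed.

Definition NR (M : nat) (g L : {poly rat}) :=
  forall m, (m <= M)%N -> ('X * g^`())`_m = (g * L)`_m.

Lemma coefM_eqM M (a b c : {poly rat}) :
  (forall i, (i <= M)%N -> a`_i = b`_i) ->
  forall m, (m <= M)%N -> (a * c)`_m = (b * c)`_m.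
Proof.
move=> h m hm; rewrite !coefM; apply: eq_bigr => i _; rewrite h //.
by apply: leq_trans hm; rewrite -ltnS.
Qed.

Lemma NR_mul M g1 L1 g2 L2 : NR M g1 L1 -> NR M g2 L2 -> NR M (g1 * g2) (L1 + L2).
Proof.
move=> h1 h2 m hm; rewrite derivM mulrDr coefD mulrA.
rewrite (@coefM_eqM M _ _ g2 h1 m hm).
have -> : 'X * (g1 * g2^`()) = ('X * g2^`()) * g1 by ring.
rewrite (@coefM_eqM M _ _ g1 h2 m hm).
by rewrite -coefD (_ : _ + _ = g1 * g2 * (L1 + L2)) //; ring.
Qed.

Lemma NR_1 M : NR M 1 0.
Proof. by move=> m _; rewrite derivC mulr0 mulr0. Qed.

Lemma NR_prod M (I : Type) (r : seq I) (g L : I -> {poly rat}) :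
  (forall i, NR M (g i) (L i)) -> NR M (\prod_(i <- r) g i) (\sum_(i <- r) L i).
Proof.
move=> h; elim: r => [|x r IH]; first by rewrite !big_nil; exact: NR_1.
by rewrite !big_cons; apply: NR_mul.
Qed.

Definition Lser (M : nat) (f : nat -> rat) : {poly rat} :=
  \poly_(k < M.+1) (if k == 0%N then 0 else f k).

Lemma inv1p_poly M (c : rat) : inv1p M (c *: 'X) = \poly_(k < M.+1) ((- c) ^+ k).
Proof.
rewrite /inv1p poly_def; apply: eq_bigr => k _.
by rewrite -scaleNr exprZn.
Qed.

Lemma NR_G M (c : rat) : NR M (inv1p M (c *: 'X)) (Lser M (fun k => (- c) ^+ k)).
Proof.
move=> m hm; rewrite inv1p_poly coefXM coefMr /Lser.
case: m hm => [|m] hm; first by rewrite big_ord_recl big_ord0 !coef_poly /= mulr0 addr0.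
rewrite /= coef_deriv big_ord_recl !coef_poly /= mulr0 add0r ltnS hm.
rewrite (eq_bigr (fun _ => (- c) ^+ m.+1)).
  by rewrite sumr_const card_ord.
move=> k _; rewrite /bump /= add1n !coef_poly /= subSS.
have hk : (k <= m)%N by rewrite -ltnS.
rewrite !ltnS (leq_trans (leq_subr _ _) (ltnW hm)) (leq_ltn_trans hk hm).
by rewrite -exprD addnS subnK.
Qed.

Lemma NR_H M (c : rat) : NR M (1 - c *: 'X) (Lser M (fun k => - c ^+ k)).
Proof.
move=> m hm; rewrite derivB derivC derivZ derivX sub0r.
rewrite mulrN -scalerAr mulr1 coefN coefZ coefX.
rewrite mulrBl mul1r coefB -scalerAl coefZ coefXM /Lser !coef_poly ltnS hm.
case: m hm => [|[|m]] hm /=.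
- by rewrite mulr0 subrr oppr0.
- by rewrite mulr1 mulr0 subr0 expr1.
- rewrite ltnS (ltnW hm) mulr0 oppr0 mulrN exprS.
  by rewrite opprK addrC subrr.
Qed.

Lemma NR_coef M G L : NR M G L -> L`_0 = 0 ->
  forall m, (m < M)%N ->
  (m.+1)%:R * G`_m.+1 = \sum_(k < m.+1) L`_k.+1 * G`_(m - k).
Proof.
move=> h L0 m hm; have := h m.+1 hm.
rewrite coefXM /= coef_deriv coefMr big_ord_recl L0 mulr0 add0r mulr_natl => ->.
apply: eq_bigr => k _.
by rewrite /bump /= subSS mulrC.
Qed.

Lemma coef0_prod (I : Type) (r : seq I) (g : I -> {poly rat}) :
  (\prod_(i <- r) g i)`_0 = \prod_(i <- r) (g i)`_0.
Proof.
elim: r => [|x r IH]; first by rewrite !big_nil (coef1 _ 0).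
by rewrite !big_cons coef0M IH.
Qed.

Definition G0 (M j : nat) : {poly rat} := \prod_(0 <= i < j) inv1p M (i%:R *: 'X).
Definition H0 (j : nat) : {poly rat} := \prod_(1 <= i < j) (1 - i%:R *: 'X).

Lemma sum_from1 (F : nat -> rat) j : F 0%N = 0 ->
  \sum_(1 <= i < j) F i = \sum_(i < j) F i.
Proof.
move=> F0; rewrite -(big_mkord xpredT F).
case: j => [|j]; first by rewrite !big_geq.
by rewrite (big_ltn (n := j.+1)) // F0 add0r.
Qed.

Lemma G0_val M j m : (m <= M)%N -> (Qp sG m).[j%:R] = (G0 M j)`_m.
Proof.
have hNR := NR_prod (index_iota 0 j) (fun i => @NR_G M (i%:R)).
move=> hmM; apply: (@Qp_val sG (fun m => (G0 M j)`_m) j M _ _ m hmM).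
  rewrite /G0 coef0_prod big1 // => i _.
  by rewrite inv1p_poly coef_poly /= expr0.
move=> m' hm; rewrite (NR_coef hNR) //; last first.
  by rewrite coef_sum big1 // => i _; rewrite /Lser coef_poly.
apply: eq_bigr => k _; congr (_ * _).
rewrite coef_sum Pp_val /sG /Lser.
rewrite (eq_bigr (fun i => (-1) ^+ k.+1 * (i%:R : rat) ^+ k.+1)); last first.
  move=> i _; have hk : (k <= m')%N by rewrite -ltnS ltn_ord.
  rewrite coef_poly /= ltnS (leq_ltn_trans hk hm).
  by rewrite [LHS]exprNn.
by rewrite big_mkord -mulr_sumr.
Qed.

Lemma H0_val M j m : (m <= M)%N -> (Qp sH m).[j%:R] = (H0 j)`_m.
Proof.
have hNR := NR_prod (index_iota 1 j) (fun i => @NR_H M (i%:R)).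
move=> hmM; apply: (@Qp_val sH (fun m => (H0 j)`_m) j M _ _ m hmM).
  rewrite /H0 coef0_prod big1 // => i _.
  by rewrite coefB (coef1 _ 0) coefZ coefX mulr0 subr0.
move=> m' hm; rewrite (NR_coef hNR) //; last first.
  by rewrite coef_sum big1 // => i _; rewrite /Lser coef_poly.
apply: eq_bigr => k _; congr (_ * _).
rewrite coef_sum Pp_val /sH /Lser.
rewrite (eq_bigr (fun i => - (i%:R : rat) ^+ k.+1)); last first.
  move=> i _; have hk : (k <= m')%N by rewrite -ltnS ltn_ord.
  by rewrite coef_poly /= ltnS (leq_ltn_trans hk hm).
have E := @sum_from1 (fun i => - (i%:R : rat) ^+ k.+1) j; rewrite /= in E.
by rewrite E ?expr0n ?oppr0 // sumrN mulN1r.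
Qed.

Notation ev0 := (mcoeff 0%MM).

Lemma ev0X k (i : 'I_k) : ev0 ('X_i : {mpoly rat[k]}) = 0.
Proof. by rewrite mcoeffX mnm1_eq0. Qed.

Lemma ev0_sum k (p : {mpoly rat[k]}) :
  \sum_(m <- msupp p) p@_m * (m == 0%MM)%:R = p@_0.
Proof.
rewrite [in RHS](mpolyE p) raddf_sum /=; apply: eq_bigr => m _.
by rewrite mcoeffZ mcoeffX.
Qed.

Lemma ev0_embS k (p : {mpoly rat[k.-1]}) : ev0 (embS (n := k) p) = p@_0.
Proof.
rewrite /embS /mmap raddf_sum /= -ev0_sum; apply: eq_bigr => m _.
rewrite rmorphM /= mcoeffC eqxx mulr1; congr (_ * _).
rewrite /mmap1 rmorph_prod /=.
under eq_bigr => i _ do rewrite rmorphXn /= ev0X.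
case: (m =P 0%MM) => [->|/eqP nz].
  by rewrite big1 // => i _; rewrite mnm0E expr0.
have [i hi] : exists i, m i != 0%N.
  apply/existsP; apply: contraR nz => /existsPn h.
  by apply/eqP/mnmP => i; rewrite mnm0E; apply/eqP; move: (h i); rewrite negbK.
by rewrite (bigD1 i) //= expr0n (negbTE hi) mul0r.
Qed.

Lemma ev0_alast k : ev0 (a_last k) = 0.
Proof. exact: ev0X. Qed.

Lemma map_aser k : map_poly ev0 (aser k) = 0.
Proof.
rewrite /aser rmorph_sum big1 // => i _.
by rewrite rmorphM /= map_polyC /= ev0X mul0r.
Qed.

Lemma map_onepax2 k : map_poly ev0 (onepax2 k) = 1.
Proof. by rewrite /onepax2 rmorphD rmorph1 rmorphM /= map_aser mul0r addr0. Qed.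

Lemma inv1p0 M : inv1p M (0 : {poly rat}) = 1.
Proof.
rewrite /inv1p oppr0 big_ord_recl expr0 big1 ?addr0 // => i _.
by rewrite expr0n.
Qed.


Lemma map_iX k (i : nat) :
  map_poly ev0 ((i%:R : {mpoly rat[k]}) *: 'X) = i%:R *: 'X.
Proof.
apply/polyP => l; rewrite coef_map /= !coefZ !coefX.
by rewrite rmorphM /= !rmorph_nat.
Qed.

Lemma map_Gser k j : map_poly ev0 (Gser k j) = G0 k.+2 j.
Proof.
rewrite /Gser rmorph_prod; apply: eq_bigr => i _.
rewrite rmorphM /= map_onepax2 mul1r /inv1p rmorph_sum; apply: eq_bigr => l _.
by rewrite rmorphXn rmorphN /= map_iX.
Qed.

Lemma map_Hser k j : map_poly ev0 (Hser k j) = H0 j.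
Proof.
rewrite /Hser rmorph_prod; apply: eq_bigr => i _.
rewrite rmorphM /= rmorphB rmorph1 /= map_iX.
have -> : map_poly ev0 (inv1p (trN k) (aser k * 'X^2)) = 1.
  rewrite /inv1p rmorph_sum -(inv1p0 (trN k)); apply: eq_bigr => l _.
  by rewrite rmorphXn rmorphN rmorphM /= map_aser mul0r.
by rewrite mulr1.
Qed.

Lemma lhs_ev k j : (0 < k)%N ->
  ev0 (lhs_coef k j) = (G0 k.+2 j)`_k.+1 - (H0 j)`_k.+1.
Proof.
move=> k0; rewrite /lhs_coef -coef_map rmorphM /= map_onepax2 mulr1.
rewrite coef_map coef_drop_poly -coef_map rmorphB /= map_Gser map_Hser coefB.
by rewrite addn2 prednK.
Qed.

Lemma Tcoef (s : nat -> rat) N l : (2 <= N)%N -> (l <= 2)%N ->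
  (\sum_(1 <= i < N.+1) (s i)%:P * ('X * ('X - 1)) ^+ i)`_l =
  [:: 0; - s 1%N; s 1%N + s 2%N]`_l.
Proof.
move=> hN hl.
rewrite big_ltn; last by rewrite ltnS ltnW.
rewrite big_ltn; last by rewrite ltnS.
rewrite !coefD coef_sum big_nat big1 ?addr0; last first.
  move=> i /andP [hi _]; rewrite exprMn coefCM coefXnM.
  by rewrite (leq_trans _ hi) ?ltnS // mulr0.
rewrite expr1 exprMn !coefCM coefXnM coefXM.
case: l hl => [|[|[|l]]] //= _.
- by rewrite !mulr0 addr0.
- by rewrite coefB coefX (coef1 _ 0) sub0r mulrN1 mulr0 addr0.
- rewrite coefB coefX (coef1 _ 1) subr0 mulr1 expr2 coef0M coefB coefX.
  by rewrite (coef1 _ 0) sub0r mulrNN mulr1.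
Qed.

Unset Implicit Arguments.

Theorem proposition4p7 (n : nat) (hn : (2 <= n)%N)
  (S : nat -> {mpoly rat[(2 * n - 1)%N.-1]}) :
  S_family S ->
  const_term (S 2%N) = - (3%:R * bernoulli (2 * n)) / n%:R.
Proof.
move=> hS.
have hN : (2 * n - 1).+1 = (2 * n)%N by rewrite subn1 prednK // muln_gt0 /= (leq_trans _ hn).
have N0 : (0 < 2 * n - 1)%N by rewrite subn_gt0 (@leq_trans 4) // (leq_mul2l 2 2 n).
have N3 : (3 <= 2 * n - 1)%N by rewrite -ltnS hN (@leq_trans 4) // (leq_mul2l 2 2 n).
have oN : odd (2 * n - 1).
  by have := congr1 odd hN; rewrite /= oddM /= => /negbFE.
set N := (2 * n - 1)%N in hN N0 N3 oN hS *.
set s := fun i => (S i)@_0.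
set Q : {poly rat} := (s 0%N)%:P + \sum_(1 <= i < N.+1) (s i)%:P * ('X * ('X - 1)) ^+ i.
set Rp : {poly rat} := 'X * Q *+ 2 - Q.
have key : forall j : nat, (1 <= j)%N ->
    (Qp sG N.+1 - Qp sH N.+1).[j%:R] = Rp.[j%:R].
  move=> j hj; have := congr1 ev0 (hS j hj).
  rewrite lhs_ev // -G0_val // -(@H0_val N.+2) // => E; rewrite hornerD hornerN E.
  rewrite rmorphM /= rmorph_nat !rmorphD /= ev0_alast ev0_embS rmorph_sum /=.
  under eq_bigr => i _ do rewrite rmorphM /= ev0_embS rmorphXn /= rmorph_nat.
  rewrite /Rp /Q !hornerE horner_sum.
  under [in RHS]eq_bigr => i _ do rewrite !hornerE.
  rewrite natrB ?muln_gt0 // natrM natrM natrB // /s /=.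
  set T := \sum_(1 <= i < N.+1) _; ring.
have FR : Qp sG N.+1 - Qp sH N.+1 = Rp := poly_nat_eq key.
have c0 := F_c0 N; have c1 := F_c1 oN.
have c2 := F_c2 oN; rewrite FR in c0 c1 c2; rewrite hN in c1 c2.
have n2 : (2 * n != 2)%N by rewrite -[X in _ != X]/(2 * 1)%N eqn_mul2l /= gtn_eqF.
have {}c2 := c2 n2.
have [q0 q1 q2] : [/\ Q`_0 = s 0%N, Q`_1 = - s 1%N & Q`_2 = s 1%N + s 2%N].
  by rewrite /Q !coefD !coefC !Tcoef ?(ltnW N3) //= !add0r addr0.
move: c0 c1 c2; rewrite /Rp !coefB !coefMn !coefXM /= q0 q1 q2 => c0 c1 c2.
rewrite /const_term -/(s 2%N).
have nn0 : (n%:R : rat) != 0 by rewrite pnatr_eq0 -lt0n (ltnW hn).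
have s0 : s 0%N = 0.
  by move: c0; rewrite mul0rn sub0r => /eqP; rewrite oppr_eq0 => /eqP.
rewrite s0 mul0rn sub0r opprK natrM in c1.
have e2 : s 2%N = - 3%:R * s 1%N.
  move: c2 => /eqP; rewrite subr_eq0 => /eqP h.
  by rewrite -(addKr (s 1%N) (s 2%N)) -h mulr2n; ring.
rewrite e2 c1; field.
by rewrite nn0.
Qed.
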